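(* Let $S=\langle T,\Pi,C\rangle$ be a state space and let $(A_i,\psi_i)$, $1\le i\le k$, be abstractions of $S$ forming an additive abstraction system, and let $t,g\in T$. If $h_{add}(t,g)<C^*_j(t_j,g_j)+R^*_j(t_j,g_j)$ for some $j\in\{1,\dots,k\}$, then $h_{add}(t,g)\ne OPT(t,g)$.
   Context: A state space is a weighted directed graph $S=\langle T,\Pi,C\rangle$ where $T$ is a finite set of states, $\Pi\subseteq T\times T$ is a set of directed edges, and $C:\Pi\to\mathbb{N}=\{0,1,2,\dots\}$. A path from $u$ to $v$ is a sequence of edges $\langle\pi^1,\dots,\pi^n\rangle$ with $\pi^j=(u^{j-1},u^j)\in\Pi$, $u^0=u$, $u^n=v$; its cost is $C(\pi)=\sum_j C(\pi^j)$. $OPT(u,v)$ is the minimum cost of a path from $u$ to $v$ in $S$ (minima over empty sets are $+\infty$). An abstract state space is $A_i=\langle T_i,\Pi_i,C_i,R_i\rangle$ with $T_i$ a set of abstract states, $\Pi_i\subseteq T_i\times T_i$, and edge weights $C_i,R_i:\Pi_i\to\mathbb{N}$ (primary and residual cost), extended additively to paths. An abstraction of $S$ is a pair $(A_i,\psi_i)$ with $\psi_i:T\to T_i$ such that (1) for every $(u,v)\in\Pi$, $(\psi_i(u),\psi_i(v))\in\Pi_i$, and (2) for every $\pi=(u,v)\in\Pi$, $C_i(\pi_i)+R_i(\pi_i)\le C(\pi)$ where $\pi_i=(\psi_i(u),\psi_i(v))$. The system is additive if for every $\pi\in\Pi$, $\sum_{i=1}^k C_i(\pi_i)\le C(\pi)$.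 Write $t_i=\psi_i(t)$. Define $C^*_i(x,y)=\min\{C_i(\rho):\rho\text{ a path from }x\text{ to }y\text{ in }A_i\}$, $h_{add}(t,g)=\sum_{i=1}^k C^*_i(t_i,g_i)$; $P_i(x,y)$ is the set of paths $\rho$ from $x$ to $y$ in $A_i$ with $C_i(\rho)=C^*_i(x,y)$, and $R^*_i(x,y)=\min_{\rho\in P_i(x,y)}R_i(\rho)$. *)

(* Defs.v *)
(* Extended naturals N ∪ {+oo} are represented by option nat,
   with None = +oo. *)
From Stdlib Require Import Arith List Classical ClassicalEpsilon.
Import ListNotations.

Definition eadd (a b : option nat) : option nat :=
  match a, b with Some x, Some y => Some (x + y) | _, _ => None end.

Definition elt (a b : option nat) : Prop :=
  match a, b with
  | Some x, Some y => x < y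
  | Some _, None => True
  | None, _ => False
  end.

Definition is_least (P : nat -> Prop) (n : nat) : Prop :=
  P n /\ forall m, P m -> n <= m.

Definition inf_nat (P : nat -> Prop) : option nat :=
  match excluded_middle_informative (exists n, is_least P n) with
  | left H => Some (proj1_sig (constructive_indefinite_description _ H))
  | right _ => None
  end.

(** Paths as edge sequences, encoded by the start vertex u and the list
    [u^1; ...; u^n] of subsequent vertices; n = 0 is the empty path (u = v). *)
Fixpoint is_path {X : Type} (E : X -> X -> Prop) (u : X) (l : list X) (v : X)
  : Prop :=
  match l with
  | [] => u = v
  | x :: l' => E u x /\ is_path E x l' v
  end.

Fixpoint path_cost {X : Type} (c : X -> X -> nat) (u : X) (l : list X) : nat :=
  match l with
  | [] => 0
  | x :: l' => c u x + path_cost c x l'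
  end.

(** State space S = <T, Pi, C>; C is only ever evaluated on edges. *)
Record StateSpace := {
  st : Type;
  st_finite : exists l : list st, forall x, In x l;
  edge : st -> st -> Prop;
  cost : st -> st -> nat
}.

Record AbsSpace := {
  ast : Type;
  aedge : ast -> ast -> Prop;
  acost : ast -> ast -> nat;
  rcost : ast -> ast -> nat
}.

Definition is_abstraction (S : StateSpace) (A : AbsSpace) (psi : st S -> ast A)
  : Prop :=
  (forall u v, edge S u v -> aedge A (psi u) (psi v)) /\
  (forall u v, edge S u v ->
     acost A (psi u) (psi v) + rcost A (psi u) (psi v) <= cost S u v).

Fixpoint nsum (f : nat -> nat) (n : nat) : nat :=
  match n with 0 => 0 | S n' => nsum f n' + f n' end.

Fixpoint esum (f : nat -> option nat) (n : nat) : option nat :=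
  match n with 0 => Some 0 | S n' => eadd (esum f n') (f n') end.

(** Abstractions are indexed by i = 0 .. k-1 (the paper's 1 .. k). *)
Definition additive (S : StateSpace) (k : nat) (A : nat -> AbsSpace)
  (psi : forall i, st S -> ast (A i)) : Prop :=
  forall u v, edge S u v ->
    nsum (fun i => acost (A i) (psi i u) (psi i v)) k <= cost S u v.

Definition OPT (S : StateSpace) (u v : st S) : option nat :=
  inf_nat (fun c => exists l, is_path (edge S) u l v /\ path_cost (cost S) u l = c).

Definition Cstar (A : AbsSpace) (x y : ast A) : option nat :=
  inf_nat (fun c => exists l, is_path (aedge A) x l y /\ path_cost (acost A) x l = c).

Definition Rstar (A : AbsSpace) (x y : ast A) : option nat :=
  inf_nat (fun r => exists l, is_path (aedge A) x l y /\
             Some (path_cost (acost A) x l) = Cstar A x y /\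
             path_cost (rcost A) x l = r).

Definition h_add (S : StateSpace) (k : nat) (A : nat -> AbsSpace)
  (psi : forall i, st S -> ast (A i)) (t g : st S) : option nat :=
  esum (fun i => Cstar (A i) (psi i t) (psi i g)) k.

(* Main.v *)
Require Import Defs.
From Stdlib Require Import Arith List Lia Classical ClassicalEpsilon.
Import ListNotations.

Lemma inf_some (P : nat -> Prop) n : inf_nat P = Some n -> is_least P n.
Proof.
  unfold inf_nat. destruct excluded_middle_informative as [H|H]; [|discriminate].
  intro E; injection E as <-. exact (proj2_sig (constructive_indefinite_description _ H)).
Qed.

Lemma least_ex (P : nat -> Prop) : forall m, P m -> exists n, is_least P n.
Proof.
  intro m; induction m as [m IH] using lt_wf_ind; intro Hm.
  destruct (classic (exists m', m' < m /\ P m')) as [[m' [H1 H2]]|H].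
  - exact (IH m' H1 H2).
  - exists m; split; auto. intros m' Hm'.
    destruct (le_lt_dec m m'); auto. exfalso; apply H; eauto.
Qed.

Lemma inf_le (P : nat -> Prop) m : P m -> exists n, inf_nat P = Some n /\ n <= m.
Proof.
  intro Hm. unfold inf_nat. destruct excluded_middle_informative as [H|H].
  - eexists; split; [reflexivity|].
    apply (proj2 (proj2_sig (constructive_indefinite_description _ H))); auto.
  - exfalso; apply H; eapply least_ex; eauto.
Qed.

Definition oget (o : option nat) := match o with Some x => x | None => 0 end.

Lemma esum_some f k n : esum f k = Some n ->
  (forall i, i < k -> f i = Some (oget (f i))) /\ nsum (fun i => oget (f i)) k = n.
Proof.
  revert n; induction k; simpl; intros n E.
  - injection E as <-; split; [intros; lia|reflexivity].
  - destruct (esum f k) as [a|] eqn:Ea; [|discriminate].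
    destruct (f k) as [b|] eqn:Eb; [|discriminate].
    injection E as <-. destruct (IHk a eq_refl) as [H1 H2].
    split.
    + intros i Hi. destruct (Nat.eq_dec i k) as [->|]; [rewrite Eb; reflexivity|].
      apply H1; lia.
    + rewrite H2; reflexivity.
Qed.

Lemma nsum_mono a b k : (forall i, i < k -> a i <= b i) -> nsum a k <= nsum b k.
Proof. induction k; simpl; intros H; auto. specialize (IHk (fun i Hi => H i ltac:(lia))).
  specialize (H k ltac:(lia)). lia. Qed.

Lemma nsum_eq a b k : (forall i, i < k -> b i <= a i) -> nsum a k <= nsum b k ->
  forall i, i < k -> a i = b i.
Proof.
  induction k; simpl; intros H Hs i Hi; [lia|].
  assert (Hm : nsum b k <= nsum a k) by (apply nsum_mono; intros; apply H; lia).
  assert (Hk := H k ltac:(lia)).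
  destruct (Nat.eq_dec i k) as [->|]; [lia|].
  apply IHk; [intros; apply H; lia|lia|lia].
Qed.

Lemma nsum_plus a b k : nsum (fun i => a i + b i) k = nsum a k + nsum b k.
Proof. induction k; simpl; lia. Qed.

Lemma nsum_ext a b k : (forall i, i < k -> a i = b i) -> nsum a k = nsum b k.
Proof. induction k; simpl; intros H; auto. rewrite IHk, (H k); auto; intros; apply H; lia. Qed.

Section Paths.
Variable S : StateSpace.

Lemma map_path (A : AbsSpace) (psi : st S -> ast A) :
  is_abstraction S A psi -> forall l u v, is_path (edge S) u l v ->
  is_path (aedge A) (psi u) (map psi l) (psi v) /\
  path_cost (acost A) (psi u) (map psi l) + path_cost (rcost A) (psi u) (map psi l)
    <= path_cost (cost S) u l.
Proof.
  intros [He Hc]; induction l as [|x l IH]; simpl; intros u v Hp.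
  - subst; split; auto.
  - destruct Hp as [E P]. destruct (IH _ _ P) as [P' C']. split; auto.
    specialize (Hc _ _ E). lia.
Qed.

Lemma add_path k (A : nat -> AbsSpace) (psi : forall i, st S -> ast (A i)) :
  additive S k A psi -> forall l u v, is_path (edge S) u l v ->
  nsum (fun i => path_cost (acost (A i)) (psi i u) (map (psi i) l)) k
    <= path_cost (cost S) u l.
Proof.
  intros Ha; induction l as [|x l IH]; simpl; intros u v Hp.
  - clear. induction k; simpl; lia.
  - destruct Hp as [E P]. specialize (IH _ _ P). specialize (Ha _ _ E).
    rewrite nsum_plus. lia.
Qed.
End Paths.

Theorem lemma10 (S : StateSpace) (k : nat) (A : nat -> AbsSpace)
  (psi : forall i, st S -> ast (A i))
  (Habs : forall i, i < k -> is_abstraction S (A i) (psi i))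
  (Hadd : additive S k A psi)
  (t g : st S) (j : nat) (Hj : j < k)
  (Hlt : elt (h_add S k A psi t g)
             (eadd (Cstar (A j) (psi j t) (psi j g))
                   (Rstar (A j) (psi j t) (psi j g)))) :
  h_add S k A psi t g <> OPT S t g.
Proof.
  intro Heq.
  destruct (h_add S k A psi t g) as [n|] eqn:Eh; [|contradiction].
  unfold h_add in Eh. apply esum_some in Eh as [Hs Hn].
  symmetry in Heq. apply inf_some in Heq as [[l [Hp Hc]] _].
  set (rho i := map (psi i) l).
  assert (Hge : forall i, i < k ->
    oget (Cstar (A i) (psi i t) (psi i g)) <= path_cost (acost (A i)) (psi i t) (rho i)).
  { intros i Hi. rewrite (Hs i Hi) in *. simpl.
    destruct (map_path S _ _ (Habs i Hi) l t g Hp) as [P _].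
    pose proof (Hs i Hi) as E. unfold Cstar in E. apply inf_some in E as [_ Hm].
    apply Hm. eauto. }
  assert (Hsum := add_path S k A psi Hadd l t g Hp).
  assert (Hall := nsum_eq (fun i => path_cost (acost (A i)) (psi i t) (rho i))
     (fun i => oget (Cstar (A i) (psi i t) (psi i g))) k Hge ltac:(unfold rho; lia)).
  specialize (Hall j Hj). simpl in Hall.
  destruct (map_path S _ _ (Habs j Hj) l t g Hp) as [P Cj].
  pose proof (Hs j Hj) as Ej.
  destruct (inf_le (fun r => exists l, is_path (aedge (A j)) (psi j t) l (psi j g) /\
             Some (path_cost (acost (A j)) (psi j t) l) = Cstar (A j) (psi j t) (psi j g) /\
             path_cost (rcost (A j)) (psi j t) l = r)
             (path_cost (rcost (A j)) (psi j t) (rho j))) as [r [Er Hr]].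
  { exists (rho j); split; [exact P|split; [|reflexivity]].
    rewrite Ej; f_equal; exact Hall. }
  fold (Rstar (A j) (psi j t) (psi j g)) in Er.
  rewrite Ej, Er in Hlt. simpl in Hlt.
  unfold rho in *. lia.
Qed.
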